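(* Let $R$ be a $*$-ring with unity, $a,b\in R$ with $a\lesssim b$, and $h$ a central projection of $R$. Then $ha\lesssim hb$.
   Context: Natural partial order: $a\leq b$ iff there is $x\in R$ with $a=xa=xb=ax^*=bx^*$. Equivalence: $a\sim b$ iff there exist $x,y\in R$ with $aa^*=xx^*$, $bb^*=yy^*$, $a^*a=y^*y$, $b^*b=x^*x$, $x=ax=xb$ and $y=by=ya$. Dominance: $a\lesssim b$ iff $a\sim c$ and $c\leq b$ for some $c\in R$. A projection is $e=e^2=e^*$; central means commuting with all elements. *)

(* Defs.v *)
From mathcomp Require Import all_boot all_algebra.
Set Implicit Arguments. Unset Strict Implicit. Unset Printing Implicit Defensive.
Import GRing.Theory.
Local Open Scope ring_scope.

Definition is_involution (R : pzRingType) (star : R -> R) : Prop :=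
  [/\ forall x y : R, star (x + y) = star x + star y,
      forall x y : R, star (x * y) = star y * star x
    & forall x : R, star (star x) = x].

Definition star_le (R : pzRingType) (star : R -> R) (a b : R) : Prop :=
  exists x : R, [/\ a = x * a, a = x * b, a = a * star x & a = b * star x].

Definition star_equiv (R : pzRingType) (star : R -> R) (a b : R) : Prop :=
  exists x y : R,
    [/\ a * star a = x * star x, b * star b = y * star y,
        star a * a = star y * y, star b * b = star x * x
      & [/\ x = a * x, x = x * b, y = b * y & y = y * a]].

Definition star_dom (R : pzRingType) (star : R -> R) (a b : R) : Prop :=
  exists c : R, star_equiv star a c /\ star_le star c b.

Definition projection (R : pzRingType) (star : R -> R) (e : R) : Prop :=
  e * e = e /\ star e = e.

Definition central (R : pzRingType) (e : R) : Prop :=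
  forall r : R, e * r = r * e.

(* Main.v *)
Require Import Defs.
From mathcomp Require Import all_boot all_algebra.
Local Open Scope ring_scope.
Import GRing.Theory.

Theorem mainTheorem10 (R : pzRingType) (star : R -> R)
  (Hstar : is_involution star) (a b h : R) :
  star_dom star a b -> projection star h -> central h ->
  star_dom star (h * a) (h * b).
Proof.
case: Hstar => _ sM _.
move=> [c [[x [y [E1 E2 E3 E4 [Ex1 Ex2 Ey1 Ey2]]]] [z [L1 L2 L3 L4]]]] [hh hs] hc.
have K1 : forall u v, h * u * (v * h) = h * (u * v).
  by move=> u v; rewrite mulrA -(hc (h * u * v)) !mulrA hh.
have K2 : forall u v, h * u * (h * v) = h * (u * v).
  by move=> u v; rewrite (hc v) K1.
have K3 : forall u v, u * h * (h * v) = h * (u * v).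
  by move=> u v; rewrite -(hc u) K2.
exists (h * c); split; last first.
  exists z; split.
  - by rewrite mulrA -hc -mulrA -L1.
  - by rewrite mulrA -hc -mulrA -L2.
  - by rewrite -mulrA -L3.
  - by rewrite -mulrA -L4.
exists (h * x), (h * y); rewrite !sM hs; split.
- by rewrite !K1 E1.
- by rewrite !K1 E2.
- by rewrite !K3 E3.
- by rewrite !K3 E4.
- split.
  + by rewrite K2 -Ex1.
  + by rewrite K2 -Ex2.
  + by rewrite K2 -Ey1.
  + by rewrite K2 -Ey2.
Qed.
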